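(* Let $N\ge1$, $\Psi_N$, $\Lambda_N$, $J_N$ be as follows: $(\Psi_N)_{jk}=\binom{j}{k}$ for $0\le j,k<N$; $\Lambda_N=\mathrm{diag}(1,-1,\dots,(-1)^{N-1})$; $J_N$ is the symmetric tridiagonal matrix with $(J_N)_{kk}=k(2k^2+3k+2-N^2)$ and $(J_N)_{k,k+1}=(J_N)_{k+1,k}=(k+1)(N^2-(k+1)^2)$. If $\vec v$ is an eigenvector of $J_N$ with eigenvalue $\lambda$, then $\Psi_N\Lambda_N\vec v$ (the signed binomial transform $w_j=\sum_{k=0}^{N-1}\binom{j}{k}(-1)^kv_k$) is an eigenvector of $J_N$ with eigenvalue $N^2-1-\lambda$. In particular, the spectrum of $J_N$ is invariant under $\lambda\mapsto N^2-1-\lambda$.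
   Context: Matrix indices start at $0$. *)

(* Defs.v *)
From HB Require Import structures.
From mathcomp Require Import all_boot all_order all_algebra.
Set Implicit Arguments. Unset Strict Implicit. Unset Printing Implicit Defensive.
Import Order.TTheory GRing.Theory Num.Theory.
Local Open Scope ring_scope.

Definition PsiN (R : nzRingType) (N : nat) : 'M[R]_N :=
  \matrix_(j < N, k < N) ('C(j, k))%:R.

Definition LambdaN (R : nzRingType) (N : nat) : 'M[R]_N :=
  \matrix_(j < N, k < N) (if j == k then (-1) ^+ j else 0).

Definition JN (R : nzRingType) (N : nat) : 'M[R]_N :=
  \matrix_(j < N, k < N)
    (if j == k then
       ((j%:Z) * (2 * (j%:Z) ^+ 2 + 3 * j%:Z + 2 - (N%:Z) ^+ 2))%:~R
     else if k == j.+1 :> nat then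
       ((k%:Z) * ((N%:Z) ^+ 2 - (k%:Z) ^+ 2))%:~R
     else if j == k.+1 :> nat then
       ((j%:Z) * ((N%:Z) ^+ 2 - (j%:Z) ^+ 2))%:~R
     else 0).

(* Main.v *)
Require Import Defs.
From HB Require Import structures.
From mathcomp Require Import all_boot all_order all_algebra.
From mathcomp Require Import ring zify.
Import Order.TTheory GRing.Theory Num.Theory.
Local Open Scope ring_scope.

Lemma core_alg (R : comPzRingType) (j l N c A B D y : R) :
  j * A = (j - l) * c ->
  (l + 1) * D = (j - l) * c ->
  (j + 1) * y = l * c + l * y ->
  B = c + y ->
  j * (N^+2 - j^+2) * A + j * (2 * j^+2 + 3 * j + 2 - N^+2) * c
  + (j+1) * (N^+2 - (j+1)^+2) * B - l * (N^+2 - l^+2) * y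
  + l * (2 * l^+2 + 3 * l + 2 - N^+2) * c - (l+1) * (N^+2 - (l+1)^+2) * D
  = (N^+2 - 1) * c.
Proof.
move=> G1 G2 G3 G4; apply/eqP; rewrite -subr_eq0.
set P := N^+2 - ((j+1)^+2 + (j+1) * l + l^+2).
have E : j * (N^+2 - j^+2) * A + j * (2 * j^+2 + 3 * j + 2 - N^+2) * c
  + (j+1) * (N^+2 - (j+1)^+2) * B - l * (N^+2 - l^+2) * y
  + l * (2 * l^+2 + 3 * l + 2 - N^+2) * c - (l+1) * (N^+2 - (l+1)^+2) * D
  - (N^+2 - 1) * c =
  (N^+2 - j^+2) * (j * A - (j - l) * c) - (N^+2 - (l+1)^+2) * ((l+1) * D - (j - l) * c)
  + P * ((j+1) * y - l * c - l * y) + (j+1) * (N^+2 - (j+1)^+2) * (B - c - y).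
  rewrite /P; ring.
rewrite E G1 G2 G3 G4; apply/eqP; ring.
Qed.

Lemma intcast (R : nzRingType) (x : int) (n : nat) : ((n%:Z) * x)%:~R = n%:R * x%:~R :> R.
Proof. by rewrite intrM. Qed.
Definition aR (R : nzRingType) (N n : nat) : R :=
  n%:R * (2 * n%:R^+2 + 3 * n%:R + 2 - N%:R^+2).
Definition bR (R : nzRingType) (N n : nat) : R := n%:R * (N%:R^+2 - n%:R^+2).

Lemma J_entry (R : comNzRingType) N (j k : 'I_N) :
  JN R N j k = (if (k:nat) == j then aR R N j else 0)
     + (if (k:nat) == j.+1 then bR R N k else 0)
     + (if k.+1 == (j:nat) then bR R N j else 0).
Proof.
rewrite mxE.
have Ea : ((j%:Z) * (2 * (j%:Z) ^+ 2 + 3 * j%:Z + 2 - (N%:Z) ^+ 2))%:~R = aR R N j.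
  rewrite /aR !(intrM, intrD, intrB, intrN, rmorphXn, rmorph_nat) -!pmulrn; ring.
have Eb : forall n : nat, ((n%:Z) * ((N%:Z) ^+ 2 - (n%:Z) ^+ 2))%:~R = bR R N n.
  move=> n; rewrite /bR !(intrM, intrD, intrB, intrN, rmorphXn, rmorph_nat) -!pmulrn; ring.
rewrite Ea !Eb.
case: (eqVneq (j:nat) k) => [/val_inj ->|ne]; first by rewrite eqxx !eqn_leq ltnn leqnSn ?andbF /= !addr0.
have ne' : (j == k) = false by apply/negbTE.
rewrite ne' add0r [(k.+1 == _)]eq_sym; case: ifP => [/eqP e|_]; last by rewrite add0r.
have -> : ((j:nat) == k.+1) = false by apply/negbTE/eqP; lia.
by rewrite addr0.
Qed.

Lemma G1 (R : comNzRingType) (j l : nat) :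
  j%:R * ('C(j.-1, l))%:R = (j%:R - l%:R) * ('C(j, l))%:R :> R.
Proof.
have e := mul_bin_down j l; case: (leqP l j) => h.
  by rewrite -natrM e natrM natrB.
have e0 : (j - l)%N = 0%N by apply/eqP; rewrite subn_eq0 ltnW.
by rewrite -natrM e e0 mul0n bin_small // mulr0.
Qed.

Lemma G2 (R : comNzRingType) (j l : nat) :
  (l%:R + 1) * ('C(j, l.+1))%:R = (j%:R - l%:R) * ('C(j, l))%:R :> R.
Proof.
have e := mul_bin_left j l; rewrite natr1; case: (leqP l j) => h.
  by rewrite -natrM e natrM natrB.
have e0 : (j - l)%N = 0%N by apply/eqP; rewrite subn_eq0 ltnW.
by rewrite -natrM e e0 mul0n bin_small // mulr0.
Qed.

Definition yv (R : nzRingType) (j l : nat) : R :=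
  if l is l'.+1 then ('C(j, l'))%:R else 0.

Lemma G3 (R : comNzRingType) (j l : nat) :
  (j%:R + 1) * yv R j l = l%:R * ('C(j, l))%:R + l%:R * yv R j l :> R.
Proof.
case: l => [|l] /=; first by rewrite !mulr0 mul0r addr0.
have E : (j.+1 * 'C(j, l) = l.+1 * 'C(j, l.+1) + l.+1 * 'C(j, l))%N.
  case: (leqP l j) => h.
    rewrite mul_bin_left -mulnDl; congr (_ * _)%N; lia.
  by rewrite !bin_small ?muln0 //; lia.
by rewrite natr1 -!natrM -natrD E.
Qed.

Lemma G4 (R : comNzRingType) (j l : nat) :
  ('C(j.+1, l))%:R = ('C(j, l))%:R + yv R j l :> R.
Proof. by case: l => [|l] /=; rewrite ?bin0 ?addr0 // binS natrD. Qed.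

Lemma ifmul (R : nzRingType) (b : bool) (x y : R) :
  (if b then x else 0) * y = if b then x * y else 0.
Proof. by case: b; rewrite ?mul0r. Qed.

Lemma mulif (R : nzRingType) (b : bool) (x y : R) :
  y * (if b then x else 0) = if b then y * x else 0.
Proof. by case: b; rewrite ?mulr0. Qed.

Lemma sum_if (R : nzRingType) N (F : nat -> R) i :
  \sum_(k < N) (if (k:nat) == i then F k else 0) = if (i < N)%N then F i else 0.
Proof. by rewrite -big_mkcond big_ord1_eq. Qed.

Lemma sum_ifS (R : nzRingType) N (F : nat -> R) i :
  \sum_(k < N) (if (k.+1 == i)%N then F k else 0) =
  if (0 < i)%N && (i.-1 < N)%N then F i.-1 else 0.
Proof.
case: i => [|i] /=; first by rewrite big1.
under eq_bigr => k _ do rewrite eqSS.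
exact: sum_if.
Qed.

Lemma M_entry (R : nzRingType) N (j k : 'I_N) :
  (PsiN R N *m LambdaN R N) j k = ('C(j, k))%:R * (-1) ^+ k.
Proof.
rewrite mxE (bigD1 k) //= !mxE eqxx big1 ?addr0 // => i ne.
by rewrite !mxE (negbTE ne) mulr0.
Qed.

Definition mm (R : nzRingType) (n l : nat) : R := ('C(n, l))%:R * (-1) ^+ l.

Lemma bRN (R : nzRingType) N : bR R N N = 0.
Proof. by rewrite /bR subrr mulr0. Qed.
Lemma bR0 (R : nzRingType) N : bR R N 0 = 0.
Proof. by rewrite /bR mul0r. Qed.

Lemma JM_entry (R : comNzRingType) N (j l : 'I_N) :
  (JN R N *m (PsiN R N *m LambdaN R N)) j l =
  aR R N j * mm R j l + bR R N j.+1 * mm R j.+1 l + bR R N j * mm R j.-1 l.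
Proof.
rewrite mxE.
under eq_bigr => k _ do rewrite J_entry M_entry !mulrDl !ifmul.
rewrite !big_split /=.
rewrite (@sum_if _ _ (fun k => aR R N j * (('C(k, l))%:R * (-1) ^+ l))).
rewrite (@sum_if _ _ (fun k => bR R N k * (('C(k, l))%:R * (-1) ^+ l))).
rewrite (@sum_ifS _ _ (fun k => bR R N j * (('C(k, l))%:R * (-1) ^+ l))).
rewrite ltn_ord /mm; congr (_ + _ + _).
  case: ifP => // /negbT; rewrite -leqNgt => h.
  have -> : j.+1 = N by apply/eqP; rewrite eqn_leq h ltn_ord.
  by rewrite bRN !mul0r.
case: (j : nat) (ltn_ord j) => [|i] /= h; first by rewrite bR0 !mul0r.
by rewrite (ltnW h).
Qed.

Lemma MJ_entry (R : comNzRingType) N (j l : 'I_N) :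
  ((PsiN R N *m LambdaN R N) *m JN R N) j l =
  mm R j l * aR R N l + mm R j l.-1 * bR R N l + mm R j l.+1 * bR R N l.+1.
Proof.
rewrite mxE.
under eq_bigr => k _ do rewrite J_entry M_entry !mulrDr !mulif
   [(l : nat) == k]eq_sym [(l : nat) == k.+1]eq_sym [l.+1 == k]eq_sym.
rewrite !big_split /=.
rewrite (@sum_if _ _ (fun k => ('C(j, k))%:R * (-1) ^+ k * aR R N k)).
rewrite (@sum_if _ _ (fun k => ('C(j, k))%:R * (-1) ^+ k * bR R N k)).
rewrite (@sum_ifS _ _ (fun k => ('C(j, k))%:R * (-1) ^+ k * bR R N l)).
rewrite ltn_ord /mm; congr (_ + _ + _).
  case: (l : nat) (ltn_ord l) => [|i] /= h; first by rewrite bR0 !mulr0.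
  by rewrite (ltnW h).
case: ifP => // /negbT; rewrite -leqNgt => h.
have -> : l.+1 = N by apply/eqP; rewrite eqn_leq h ltn_ord.
by rewrite bRN !mulr0.
Qed.

Lemma key (R : comNzRingType) N :
  JN R N *m (PsiN R N *m LambdaN R N) + (PsiN R N *m LambdaN R N) *m JN R N
  = ((N ^ 2)%:R - 1) *: (PsiN R N *m LambdaN R N).
Proof.
apply/matrixP => j l; rewrite mxE JM_entry MJ_entry [in RHS]mxE M_entry.
have Y : mm R j l.-1 * bR R N l = - (bR R N l * yv R j l) * (-1) ^+ l.
  case: (l : nat) => [|i] /=; first by rewrite bR0 mulr0 mul0r oppr0 mul0r.
  by rewrite /mm exprS; ring.
have Z : mm R j l.+1 = - ('C(j, l.+1))%:R * (-1) ^+ l.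
  by rewrite /mm exprS; ring.
rewrite Y Z.
have H := @core_alg R _ _ (N%:R) _ _ _ _ _ (G1 R j l) (G2 R j l) (G3 R j l) (G4 R j l).
move: H; rewrite /mm /aR /bR -!natr1 natrX.
move: (yv R j l) ('C(j, l))%:R ('C(j.+1, l))%:R ('C(j.-1, l))%:R ('C(j, l.+1))%:R ((-1) ^+ l : R) => y c B A D s.
move: (j%:R : R) (l%:R : R) (N%:R : R) => x z n H.
apply/eqP; rewrite -subr_eq0; move/eqP: H; rewrite -subr_eq0 => /eqP H.
rewrite -(mulr0 s) -H; apply/eqP; ring.
Qed.

Lemma M_unit (R : fieldType) N : (PsiN R N *m LambdaN R N) \in unitmx.
Proof.
rewrite unitmxE det_trig.
  apply: (big_ind (fun x : R => x \is a GRing.unit)); first exact: unitr1.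
    by move=> x y; rewrite unitrM => -> ->.
  by move=> i _; rewrite M_entry binn mul1r unitrX // unitrN1.
apply/is_trig_mxP => i k h; by rewrite M_entry bin_small // mul0r.
Qed.

Theorem mainTheorem9 (R : fieldType) (N : nat) (hN : (1 <= N)%N)
    (v : 'cV[R]_N) (lambda : R) :
  v != 0 -> JN R N *m v = lambda *: v ->
  let w := PsiN R N *m LambdaN R N *m v in
  w != 0 /\ JN R N *m w = ((N ^ 2)%:R - 1 - lambda) *: w.
Proof.
move=> v0 Hv w; split.
  apply/eqP => w0; move/eqP: v0; apply.
  have := congr1 (mulmx (invmx (PsiN R N *m LambdaN R N))) w0.
  by rewrite /w mulKmx ?M_unit // mulmx0.
have K := key R N.
rewrite /w mulmxA.
have -> : JN R N *m (PsiN R N *m LambdaN R N) =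
  ((N ^ 2)%:R - 1) *: (PsiN R N *m LambdaN R N) - (PsiN R N *m LambdaN R N) *m JN R N.
  by rewrite -K addrK.
by rewrite mulmxBl -scalemxAl -(mulmxA _ (JN R N)) Hv -scalemxAr !scalerBl.
Qed.
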